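(* Let $(E,\tau)$ be a locally solid vector lattice. Suppose that there exists a metrisable (Hausdorff) linear topology $\tau^\ast$ on $E$ that is coarser than $\tau$. Then there exists a metrisable locally solid topology $\widetilde\tau$ on $E$ that is coarser than $\tau$ and finer than $\tau^\ast$. If $\tau$ is an o-Lebesgue topology (resp. a uo-Lebesgue topology), then any such $\widetilde\tau$ is an o-Lebesgue topology (resp. a uo-Lebesgue topology). If $\tau$ is a Fatou topology, then $\widetilde\tau$ can be chosen to be a Fatou topology.
   Context: All vector lattices are real and Archimedean; linear topologies are Hausdorff. A locally solid topology on a vector lattice $E$ is a linear topology such that zero has a neighbourhood basis of solid sets. A net $(x_\alpha)$ in $E$ order converges to $x$ if there is a net $(y_\beta)$ with $y_\beta\downarrow 0$ such that for every $\beta_0$ there is $\alpha_0$ with $|x_\alpha-x|\leq y_{\beta_0}$ for all $\alpha\geq\alpha_0$. It uo-converges to $x$ if $|x_\alpha-x|\wedge|y|$ order converges to $0$ for every $y\in E$. A subset $S$ is order closed if it contains all order limits of nets in $S$. A locally solid topology $\tau$ is an o-Lebesgue topology (resp. uo-Lebesgue topology) if every net that order converges (resp. uo-converges) to $x$ also $\tau$-converges to $x$; it is a Fatou topology if zero has a neighbourhood basis of order closed solid sets. *)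

(* Defs.v *)
From HB Require Import structures.
From mathcomp Require Import all_boot all_order all_algebra.
From mathcomp Require Import reals.
Set Implicit Arguments. Unset Strict Implicit. Unset Printing Implicit Defensive.
Import Order.TTheory GRing.Theory Num.Theory.
Local Open Scope ring_scope.

Section VL.
Variables (R : realType) (E : lmodType R).

Definition is_vector_lattice (le : E -> E -> Prop) (sup : E -> E -> E) : Prop :=
  (forall x, le x x) /\
  (forall x y, le x y -> le y x -> x = y) /\
  (forall x y z, le x y -> le y z -> le x z) /\
  (forall x y z, le x y -> le (x + z) (y + z)) /\
  (forall (a : R) x y, 0 <= a -> le x y -> le (a *: x) (a *: y)) /\
  (forall x y, le x (sup x y) /\ le y (sup x y) /\
               forall z, le x z -> le y z -> le (sup x y) z) /\
  (* Archimedean *)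
  (forall x y, le 0 x -> (forall n : nat, le (x *+ n) y) -> x = 0).

Definition vinf (sup : E -> E -> E) (x y : E) : E := - sup (- x) (- y).
Definition vabs (sup : E -> E -> E) (x : E) : E := sup x (- x).

Definition directed (I : Type) (leI : I -> I -> Prop) : Prop :=
  [/\ (forall i, leI i i),
      (forall i j k, leI i j -> leI j k -> leI i k),
      (exists i : I, True) &
      (forall i j, exists k, leI i k /\ leI j k)].

Definition decr_to_zero (le : E -> E -> Prop) (J : Type) (leJ : J -> J -> Prop)
  (y : J -> E) : Prop :=
  (forall b1 b2, leJ b1 b2 -> le (y b2) (y b1)) /\
  (forall b, le 0 (y b)) /\
  (forall z, (forall b, le z (y b)) -> le z 0).

Definition order_conv (le : E -> E -> Prop) (sup : E -> E -> E)
  (I : Type) (leI : I -> I -> Prop) (x : I -> E) (x0 : E) : Prop :=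
  exists (J : Type) (leJ : J -> J -> Prop) (y : J -> E),
    directed leJ /\ decr_to_zero le leJ y /\
    forall b0, exists a0, forall a, leI a0 a -> le (vabs sup (x a - x0)) (y b0).

Definition uo_conv (le : E -> E -> Prop) (sup : E -> E -> E)
  (I : Type) (leI : I -> I -> Prop) (x : I -> E) (x0 : E) : Prop :=
  forall y : E,
    order_conv le sup leI (fun a => vinf sup (vabs sup (x a - x0)) (vabs sup y)) 0.

Definition order_closed (le : E -> E -> Prop) (sup : E -> E -> E) (S : E -> Prop) :=
  forall (I : Type) (leI : I -> I -> Prop) (x : I -> E) (x0 : E),
    directed leI -> (forall a, S (x a)) -> order_conv le sup leI x x0 -> S x0.

Definition solid (le : E -> E -> Prop) (sup : E -> E -> E) (S : E -> Prop) :=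
  forall x y, S y -> le (vabs sup x) (vabs sup y) -> S x.

Definition is_topology (tau : (E -> Prop) -> Prop) : Prop :=
  [/\ tau (fun _ => True),
      tau (fun _ => False),
      (forall U V, tau U -> tau V -> tau (fun x => U x /\ V x)) &
      (forall F : (E -> Prop) -> Prop, (forall U, F U -> tau U) ->
          tau (fun x => exists U, F U /\ U x))].

Definition nbhd (tau : (E -> Prop) -> Prop) (x : E) (U : E -> Prop) : Prop :=
  exists O, tau O /\ O x /\ forall z, O z -> U z.

Definition hausdorff (tau : (E -> Prop) -> Prop) : Prop :=
  forall x y, x <> y -> exists U V, nbhd tau x U /\ nbhd tau y V /\
                                    forall z, ~ (U z /\ V z).

Definition add_continuous (tau : (E -> Prop) -> Prop) : Prop :=
  forall x0 y0 U, nbhd tau (x0 + y0) U ->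
    exists V W, nbhd tau x0 V /\ nbhd tau y0 W /\
                forall x y, V x -> W y -> U (x + y).

Definition scale_continuous (tau : (E -> Prop) -> Prop) : Prop :=
  forall (a0 : R) x0 U, nbhd tau (a0 *: x0) U ->
    exists (e : R) V, 0 < e /\ nbhd tau x0 V /\
                forall a x, `|a - a0| < e -> V x -> U (a *: x).

Definition linear_topology (tau : (E -> Prop) -> Prop) : Prop :=
  [/\ is_topology tau, hausdorff tau, add_continuous tau & scale_continuous tau].

Definition locally_solid (le : E -> E -> Prop) (sup : E -> E -> E)
  (tau : (E -> Prop) -> Prop) : Prop :=
  linear_topology tau /\
  forall U, nbhd tau 0 U -> exists V, nbhd tau 0 V /\ solid le sup V /\
                                      forall z, V z -> U z.

Definition metrisable (tau : (E -> Prop) -> Prop) : Prop :=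
  exists d : E -> E -> R,
    [/\ (forall x y, 0 <= d x y),
        (forall x y, d x y = 0 <-> x = y),
        (forall x y, d x y = d y x),
        (forall x y z, d x z <= d x y + d y z) &
        (forall O, tau O <-> forall x, O x ->
            exists r : R, 0 < r /\ forall y, d x y < r -> O y)].

Definition coarser (tau1 tau2 : (E -> Prop) -> Prop) : Prop :=
  forall O, tau1 O -> tau2 O.

Definition tconv (tau : (E -> Prop) -> Prop) (I : Type) (leI : I -> I -> Prop)
  (x : I -> E) (x0 : E) : Prop :=
  forall U, nbhd tau x0 U -> exists a0, forall a, leI a0 a -> U (x a).

Definition o_lebesgue le sup (tau : (E -> Prop) -> Prop) : Prop :=
  locally_solid le sup tau /\
  forall (I : Type) (leI : I -> I -> Prop) (x : I -> E) (x0 : E),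
    directed leI -> order_conv le sup leI x x0 -> tconv tau leI x x0.

Definition uo_lebesgue le sup (tau : (E -> Prop) -> Prop) : Prop :=
  locally_solid le sup tau /\
  forall (I : Type) (leI : I -> I -> Prop) (x : I -> E) (x0 : E),
    directed leI -> uo_conv le sup leI x x0 -> tconv tau leI x x0.

Definition fatou le sup (tau : (E -> Prop) -> Prop) : Prop :=
  locally_solid le sup tau /\
  forall U, nbhd tau 0 U -> exists V, nbhd tau 0 V /\ solid le sup V /\
                  order_closed le sup V /\ forall z, V z -> U z.

End VL.

(* Main.v *)
Require Import Defs.
From HB Require Import structures.
From mathcomp Require Import all_boot all_order all_algebra.
From mathcomp Require Import reals.
From mathcomp Require Import lra zify.
From Stdlib Require Import Lia Classical FunctionalExtensionality PropExtensionality ClassicalEpsilon.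
Import Order.TTheory GRing.Theory Num.Theory.
Set Implicit Arguments. Unset Strict Implicit. Unset Printing Implicit Defensive.
Local Open Scope ring_scope.

Section Reals.
Variable R : realType.
Definition w (n : nat) : R := (2 ^+ n)^-1.

Lemma w_gt0 n : 0 < w n.
Proof. by rewrite /w invr_gt0 exprn_gt0. Qed.

Lemma wS n : w n.+1 = w n / 2.
Proof. by rewrite /w exprSr invfM. Qed.

Lemma w0 : w 0 = 1.
Proof. by rewrite /w expr0 invr1. Qed.

Lemma w_le m n : (m <= n)%N -> w n <= w m.
Proof.
move=> mn; rewrite /w lef_pV2 ?posrE ?exprn_gt0 //.
by rewrite ler_eXn2l // ltr1n.
Qed.

Lemma w_lt_inv m n : w m < w n -> (n < m)%N.
Proof.
move=> h; rewrite ltnNge; apply/negP => nm.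
by move: (w_le nm); rewrite leNgt h.
Qed.

Lemma w_small (r : R) : 0 < r -> exists m, w m < r.
Proof.
move=> r0; exists (Num.Def.archi_bound r^-1).
have := @upper_nthrootP R r^-1 _ (leqnn _) => h.
rewrite /w -(invrK r) ltf_pV2 ?posrE ?exprn_gt0 ?invr_gt0 //.
by rewrite invrK.
Qed.

Lemma w_zero (a : R) : 0 <= a -> (forall n, a <= w n) -> a = 0.
Proof.
move=> a0 h; apply/eqP; rewrite eq_le a0 andbT; rewrite leNgt; apply/negP => ap.
have [m hm] := w_small ap; move: (h m); rewrite leNgt hm //.
Qed.
End Reals.

Section Topo.
Variables (R : realType) (E : lmodType R).
Implicit Types (tau : (E -> Prop) -> Prop) (U V : E -> Prop).

Lemma nbhd_mono tau x U V : nbhd tau x U -> (forall z, U z -> V z) -> nbhd tau x V.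
Proof. by move=> [O [oO [Ox OU]]] UV; exists O; do !split=> //; move=> z /OU /UV. Qed.

Lemma nbhd_pt tau x U : nbhd tau x U -> U x.
Proof. by move=> [O [_ [Ox OU]]]; apply: OU. Qed.

Lemma nbhd_open tau x O : tau O -> O x -> nbhd tau x O.
Proof. by move=> oO Ox; exists O. Qed.

Lemma nbhd_inter tau x U V : is_topology tau -> nbhd tau x U -> nbhd tau x V ->
  nbhd tau x (fun z => U z /\ V z).
Proof.
move=> [_ _ hI _] [O1 [o1 [x1 h1]]] [O2 [o2 [x2 h2]]].
exists (fun z => O1 z /\ O2 z); split; first exact: hI.
by split=> // z [/h1 ? /h2 ?].
Qed.

Lemma open_of_nbhd tau O : is_topology tau -> (forall x, O x -> nbhd tau x O) -> tau O.
Proof.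
move=> [_ _ _ hU] h.
have -> : O = (fun x => exists S, (tau S /\ forall z, S z -> O z) /\ S x).
  apply: functional_extensionality => x; apply: propositional_extensionality; split.
    by move=> /h [S [oS [Sx SO]]]; exists S.
  by move=> [S [[_ SO] Sx]]; apply: SO.
by apply: hU => S [].
Qed.

Lemma transl0 tau x U : add_continuous tau -> nbhd tau 0 U ->
  nbhd tau x (fun y => U (y - x)).
Proof.
move=> hA hU.
have hU' : nbhd tau (x + - x) U by rewrite subrr.
have [V [W [hV [hW hVW]]]] := hA _ _ _ hU'.
eapply nbhd_mono; first exact: hV; move=> v Vv /=; apply: hVW => //; apply: nbhd_pt hW.
Qed.

Lemma transl_back tau x B : add_continuous tau -> nbhd tau x B ->
  nbhd tau 0 (fun z => B (x + z)).
Proof.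
move=> hA hB.
have hB' : nbhd tau (x + 0) B by rewrite addr0.
have [V [W [hV [hW hVW]]]] := hA _ _ _ hB'.
eapply nbhd_mono; first exact: hW; move=> z Wz /=; apply: hVW => //; apply: nbhd_pt hV.
Qed.

Lemma nbhd_double tau U : is_topology tau -> add_continuous tau -> nbhd tau 0 U ->
  exists V, nbhd tau 0 V /\ forall a b, V a -> V b -> U (a + b).
Proof.
move=> hT hA hU.
have hU' : nbhd tau (0 + 0) U by rewrite addr0.
have [V [W [hV [hW hVW]]]] := hA _ _ _ hU'.
exists (fun z => V z /\ W z); split; first exact: nbhd_inter.
by move=> a b [Va _] [_ Wb]; apply: hVW.
Qed.

Lemma nbhd_triple tau U : is_topology tau -> add_continuous tau -> nbhd tau 0 U ->
  exists V, nbhd tau 0 V /\ forall a b c, V a -> V b -> V c -> U (a + b + c).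
Proof.
move=> hT hA hU.
have [A [hA1 hA2]] := nbhd_double hT hA hU.
have [B [hB1 hB2]] := nbhd_double hT hA hA1.
exists (fun z => B z /\ A z); split; first exact: nbhd_inter.
by move=> a b c [Ba _] [Bb _] [_ Ac]; apply: hA2 => //; apply: hB2.
Qed.

Definition mtop (d : E -> E -> R) : (E -> Prop) -> Prop :=
  fun O => forall x, O x -> exists r : R, 0 < r /\ forall y, d x y < r -> O y.

Lemma ball_open (d : E -> E -> R) x r :
  (forall x y z, d x z <= d x y + d y z) ->
  mtop d (fun y => d x y < r).
Proof.
move=> tri y hy; exists (r - d x y); split; first by rewrite subr_gt0.
move=> z hz; have := tri x y z; lra.
Qed.

Lemma mtop_topology (d : E -> E -> R) : is_topology (mtop d).
Proof.
split.
- by move=> x _; exists 1; split.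
- by move=> x [].
- move=> U V hU hV x [Ux Vx].
  have [r1 [r10 h1]] := hU x Ux; have [r2 [r20 h2]] := hV x Vx.
  exists (Num.min r1 r2); split; first by rewrite lt_min r10 r20.
  by move=> y; rewrite lt_min => /andP[/h1 ? /h2 ?].
- move=> F hF x [U [FU Ux]].
  have [r [r0 h]] := hF U FU x Ux; exists r; split=> // y /h Uy.
  by exists U.
Qed.
End Topo.

Section Lat.
Variables (R : realType) (E : lmodType R) (le : E -> E -> Prop) (sup : E -> E -> E).
Hypothesis hVL : is_vector_lattice le sup.

Let A x := vabs sup x.

Lemma vl_trans x y z : le x y -> le y z -> le x z.
Proof. by case: hVL => _ [_ [h _]]; apply: h. Qed.

Lemma vl_add x y z : le x y -> le (x + z) (y + z).
Proof. by case: hVL => _ [_ [_ [h _]]]; apply: h. Qed.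

Lemma vl_scale (a : R) x y : 0 <= a -> le x y -> le (a *: x) (a *: y).
Proof. by case: hVL => _ [_ [_ [_ [h _]]]]; apply: h. Qed.

Lemma vl_sup x y : le x (sup x y) /\ le y (sup x y) /\
               forall z, le x z -> le y z -> le (sup x y) z.
Proof. by case: hVL => _ [_ [_ [_ [_ [h _]]]]]. Qed.

Lemma vabs_ge x : le x (vabs sup x) /\ le (- x) (vabs sup x).
Proof. by have [h1 [h2 _]] := vl_sup x (- x). Qed.

Lemma vabs_ge0 x : le 0 (vabs sup x).
Proof.
have [h1 h2] := vabs_ge x; set a := vabs sup x in h1 h2 *.
have e1 := vl_add (- x) h1; rewrite subrr in e1.
have e2 := vl_add a h2; rewrite [- x + a]addrC in e2.
have e3 := vl_trans e1 e2.
have e4 := @vl_scale (2^-1) _ _ _ e3; rewrite scaler0 in e4.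
suff <- : 2^-1 *: (a + a) = a by apply: e4; rewrite invr_ge0.
by rewrite -mulr2n -scaler_nat scalerA mulVf ?pnatr_eq0 // scale1r.
Qed.

Lemma scale_le_abs (c : R) y a : 0 <= c -> c <= 1 -> le y a -> le 0 a -> le (c *: y) a.
Proof.
move=> c0 c1 ya a0.
apply: (vl_trans (vl_scale c0 ya)).
have h : le 0 ((1 - c) *: a).
  by have := @vl_scale (1 - c) _ _ _ a0; rewrite scaler0; apply; rewrite subr_ge0.
have := vl_add (c *: a) h; rewrite add0r -scalerDl subrK scale1r //.
Qed.

Lemma vabs_scale (b : R) x : `|b| <= 1 -> le (vabs sup (b *: x)) (vabs sup x).
Proof.
move=> hb; have [_ [_ hl]] := vl_sup (b *: x) (- (b *: x)); apply: hl.
- have [h1 h2] := vabs_ge x; have h0 := vabs_ge0 x.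
  have [b0|b0] := lerP 0 b.
    by apply: scale_le_abs => //; rewrite -(ger0_norm b0).
  have -> : b *: x = (- b) *: (- x) by rewrite scalerN scaleNr opprK.
  apply: scale_le_abs => //; first lra.
  by rewrite -(ltr0_norm b0).
- have [h1 h2] := vabs_ge x; have h0 := vabs_ge0 x.
  have [b0|b0] := lerP 0 b.
    by rewrite -scalerN; apply: scale_le_abs => //; rewrite -(ger0_norm b0).
  rewrite -scaleNr; apply: scale_le_abs => //; first lra.
  by rewrite -(ltr0_norm b0).
Qed.

Lemma solid_scale S x (b : R) : solid le sup S -> S x -> `|b| <= 1 -> S (b *: x).
Proof. by move=> hS Sx hb; apply: (hS _ x Sx); apply: vabs_scale. Qed.

End Lat.

Section Constr.
Variables (R : realType) (E : lmodType R) (le : E -> E -> Prop) (sup : E -> E -> E).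
Hypothesis hVL : is_vector_lattice le sup.
Variable tau : (E -> Prop) -> Prop.
Hypotheses (htauT : is_topology tau) (htauA : add_continuous tau)
  (htauS : scale_continuous tau).
Variables (taus : (E -> Prop) -> Prop) (dS : E -> E -> R).
Hypotheses (dS_ge0 : forall x y, 0 <= dS x y) (dS_eq : forall x y, dS x y = 0 <-> x = y)
  (dS_tri : forall x y z, dS x z <= dS x y + dS y z)
  (hsT : forall O, taus O <-> mtop dS O) (hsA : add_continuous taus)
  (hco : coarser taus tau).
Variable Q : (E -> Prop) -> Prop.
Hypotheses (hQ : forall U, nbhd tau 0 U -> exists V, nbhd tau 0 V /\ Q V /\ forall z, V z -> U z)
  (hQs : forall V, Q V -> solid le sup V).

Lemma step (U : E -> Prop) (n : nat) : exists V, nbhd tau 0 U ->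
  [/\ nbhd tau 0 V, Q V, (forall z, V z -> U z), (forall z, V z -> dS 0 z < w R n)
    & (forall a b c, V a -> V b -> V c -> U (a + b + c))].
Proof.
case: (classic (nbhd tau 0 U)) => hU; last by exists U.
have [T [hT hT3]] := nbhd_triple htauT htauA hU.
have hW : nbhd tau 0 (fun z => dS 0 z < w R n).
  apply: nbhd_open; last by have [_ ->] := dS_eq 0 0; [exact: w_gt0|].
  by apply: hco; apply/hsT; apply: ball_open.
have hUTW := nbhd_inter htauT (nbhd_inter htauT hU hT) hW.
have [V [hV [QV VU]]] := hQ hUTW.
exists V => _; split => //.
- by move=> z /VU [[]].
- by move=> z /VU [].
- by move=> a b c /VU [[_ Ta] _] /VU [[_ Tb] _] /VU [[_ Tc] _]; apply: hT3.
Qed.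

Definition g U n := proj1_sig (constructive_indefinite_description _ (step U n)).
Lemma gP U n : nbhd tau 0 U ->
  [/\ nbhd tau 0 (g U n), Q (g U n), (forall z, g U n z -> U z),
      (forall z, g U n z -> dS 0 z < w R n)
    & (forall a b c, g U n a -> g U n b -> g U n c -> U (a + b + c))].
Proof. exact: (proj2_sig (constructive_indefinite_description _ (step U n))). Qed.

Fixpoint Us (n : nat) : E -> Prop :=
  match n with 0 => fun _ => True | m.+1 => g (Us m) m.+1 end.

Lemma Us_nbhd n : nbhd tau 0 (Us n).
Proof.
elim: n => [|n IH] /=; last by case: (gP n.+1 IH).
by case: htauT => hT _ _ _; apply: nbhd_open.
Qed.

Lemma Us_spec m :
  [/\ Q (Us m.+1), (forall z, Us m.+1 z -> Us m z),
      (forall z, Us m.+1 z -> dS 0 z < w R m.+1)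
    & (forall a b c, Us m.+1 a -> Us m.+1 b -> Us m.+1 c -> Us m (a + b + c))].
Proof. by case: (gP m.+1 (Us_nbhd m)). Qed.

Lemma Us_sub m n : (m <= n)%N -> forall z, Us n z -> Us m z.
Proof.
elim: n => [|n IH]; first by rewrite leqn0 => /eqP ->.
rewrite leq_eqVlt => /orP [/eqP -> //|]; rewrite ltnS => mn z hz.
by apply: IH => //; case: (Us_spec n) => _ h _ _; apply: h.
Qed.

Lemma Us0 n : Us n 0.
Proof. exact: nbhd_pt (Us_nbhd n). Qed.

Lemma Us_scale n z (b : R) : Us n z -> `|b| <= 1 -> Us n (b *: z).
Proof.
case: n => [//|n] hz hb; case: (Us_spec n) => QU _ _ _.
exact: (solid_scale hVL (hQs QU)).
Qed.

Fixpoint valid (l : seq (nat * E)) : Prop :=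
  match l with [::] => True | q :: l' => Us q.1 q.2 /\ valid l' end.
Fixpoint vsum (l : seq (nat * E)) : E :=
  match l with [::] => 0 | q :: l' => q.2 + vsum l' end.
Fixpoint wsum (l : seq (nat * E)) : R :=
  match l with [::] => 0 | q :: l' => w R q.1 + wsum l' end.

Lemma wsum_ge0 l : 0 <= wsum l.
Proof. by elim: l => [|q l IH] //=; rewrite addr_ge0 // ltW // w_gt0. Qed.

Lemma wsum_cat l1 l2 : wsum (l1 ++ l2) = wsum l1 + wsum l2.
Proof. by elim: l1 => [|q l IH] /=; rewrite ?add0r // IH addrA. Qed.

Lemma vsum_cat l1 l2 : vsum (l1 ++ l2) = vsum l1 + vsum l2.
Proof. by elim: l1 => [|q l IH] /=; rewrite ?add0r // IH addrA. Qed.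

Lemma valid_cat l1 l2 : valid (l1 ++ l2) <-> valid l1 /\ valid l2.
Proof. by elim: l1 => [|q l IH] /=; [tauto | rewrite IH; tauto]. Qed.

Lemma split_list l (t : R) : 0 <= t -> t < wsum l ->
  exists l1 a l2, [/\ l = l1 ++ a :: l2, wsum l1 <= t & t < wsum l1 + w R a.1].
Proof.
elim: l t => [|q l IH] t t0 /=; first by rewrite ltNge t0.
move=> ht; case: (ltrP t (w R q.1)) => hq.
  by exists [::], q, l; split => //=; rewrite add0r.
have h0 : 0 <= t - w R q.1 by rewrite subr_ge0.
have h0' : t - w R q.1 < wsum l by lra.
have [l1 [a [l2 [-> h1 h2]]]] := IH _ h0 h0'.
exists (q :: l1), a, l2; split => //=; lra.
Qed.

Lemma key k : forall l n, (size l <= k)%N -> valid l -> wsum l < w R n -> Us n (vsum l).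
Proof.
elim: k => [|k IH] [|q l] n //= hs; try by move=> *; apply: Us0.
move=> [hq hl] hw.
set S := w R q.1 + wsum l.
have eS : S = w R q.1 + wsum l by [].
clearbody S.
have S0 : 0 < S by rewrite eS ltr_wpDr ?wsum_ge0 ?w_gt0.
have t0 : 0 <= S / 2 by lra.
have t1 : S / 2 < wsum (q :: l) by rewrite /= -eS; lra.
have [l1 [a [l2 [el h1 h2]]]] := split_list t0 t1.
have ew : S = wsum l1 + w R a.1 + wsum l2.
  by rewrite eS -[_ + wsum l]/(wsum (q :: l)) el wsum_cat /= addrA.
have ev : vsum (q :: l) = vsum l1 + a.2 + vsum l2 by rewrite el vsum_cat /= addrA.
have hv : valid (l1 ++ a :: l2) by rewrite -el.
move/valid_cat: hv => [hv1 /= [ha hv2]].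
have hsz : (size l1 + (size l2).+1 = (size l).+1)%N by have := congr1 size el; rewrite size_cat /= => ->.
have wn := wS R n.
have ha' : Us n.+1 a.2.
  apply: (Us_sub (m := n.+1) (n := a.1)) => //; apply: (@w_lt_inv R).
  have := wsum_ge0 l1; have := wsum_ge0 l2; lra.
have hl1 : Us n.+1 (vsum l1).
  apply: IH => //; first by move: hs; rewrite -hsz; lia.
  lra.
have hl2 : Us n.+1 (vsum l2).
  apply: IH => //; first by move: hs; rewrite -hsz; lia.
  have := wsum_ge0 l1; lra.
case: (Us_spec n) => _ _ _ h3.
by rewrite -/(vsum (q :: l)) ev; apply: h3.
Qed.


Definition reps x : R -> Prop := fun s => exists l, [/\ valid l, vsum l = x & s = wsum l].
Definition p x := inf (reps x).

Lemma reps_ne x : exists s, reps x s.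
Proof. by exists (w R 0 + 0), [:: (0%N, x)]; split => //=; rewrite addr0. Qed.

Lemma reps_lb x : exists c, forall s, reps x s -> c <= s.
Proof. by exists 0 => s [l [_ _ ->]]; apply: wsum_ge0. Qed.

Lemma p_le l x : valid l -> vsum l = x -> p x <= wsum l.
Proof.
move=> hv hx; have := @ge_inf R (reps x) (reps_lb x); apply.
by exists l.
Qed.

Lemma p_lb x c : (forall s, reps x s -> c <= s) -> c <= p x.
Proof. by move=> h; apply: lb_le_inf => //; apply: reps_ne. Qed.

Lemma p_ge0 x : 0 <= p x.
Proof. by apply: p_lb => s [l [_ _ ->]]; apply: wsum_ge0. Qed.

Lemma p_lt x c : p x < c -> exists l, [/\ valid l, vsum l = x & wsum l < c].
Proof.
move=> h; have [s [l [hv hx ->]] hs] := @inf_lt R (reps x) c (reps_ne x) h.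
by exists l.
Qed.

Lemma p_Us n x : p x < w R n -> Us n x.
Proof. by move=> /p_lt [l [hv <- hw]]; apply: (@key (size l)). Qed.

Lemma Us_p n x : Us n x -> p x <= w R n.
Proof.
move=> hx; have := @p_le [:: (n, x)] x; rewrite /= !addr0; apply => //.
Qed.

Lemma p_add x y : p (x + y) <= p x + p y.
Proof.
rewrite leNgt; apply/negP => h.
set e := (p (x + y) - p x - p y) / 2.
have e0 : 0 < e by rewrite /e; lra.
have ex : p x < p x + e by lra.
have ey : p y < p y + e by lra.
have [lx [hvx hx hwx]] := p_lt ex.
have [ly [hvy hy hwy]] := p_lt ey.
have := @p_le (lx ++ ly) (x + y).
rewrite wsum_cat vsum_cat hx hy => /(_ (proj2 (valid_cat lx ly) (conj hvx hvy)) erefl).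
rewrite /e in hwx hwy; lra.
Qed.

Definition smap (b : R) (l : seq (nat * E)) := map (fun q => (q.1, b *: q.2)) l.

Lemma smap_prop b l : `|b| <= 1 -> valid l ->
  [/\ valid (smap b l), vsum (smap b l) = b *: vsum l & wsum (smap b l) = wsum l].
Proof.
move=> hb; elim: l => [|q l IH] /=; first by rewrite scaler0.
move=> [hq /IH [h1 h2 h3]]; split.
- by split => //; apply: Us_scale.
- by rewrite h2 scalerDr.
- by rewrite h3.
Qed.

Lemma p_scale b x : `|b| <= 1 -> p (b *: x) <= p x.
Proof.
move=> hb; apply: p_lb => s [l [hv hx ->]].
have [h1 h2 h3] := smap_prop hb hv.
by rewrite -h3; apply: p_le => //; rewrite h2 hx.
Qed.

Lemma p_opp x : p (- x) = p x.
Proof.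
have h : forall z, p (- z) <= p z.
  by move=> z; rewrite -scaleN1r; apply: p_scale; rewrite normrN normr1.
by apply/eqP; rewrite eq_le h /= -{1}(opprK x) h.
Qed.

Lemma p_0 : p 0 = 0.
Proof. by apply: w_zero; [apply: p_ge0 | move=> n; apply: Us_p; apply: Us0]. Qed.

Lemma p_eq0 x : p x = 0 -> x = 0.
Proof.
move=> hx.
have h : forall n, dS 0 x <= w R n.
  move=> n; have : Us n.+1 x by apply: p_Us; rewrite hx; apply: w_gt0.
  case: (Us_spec n) => _ _ hd _ /hd/ltW h; apply: (le_trans h); apply: w_le.
  exact: leqnSn.
by have [-> //] := dS_eq 0 x; apply: w_zero.
Qed.

Lemma p_muln x N : p (x *+ N) <= p x *+ N.
Proof.
elim: N => [|N IH]; first by rewrite !mulr0n p_0.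
rewrite !mulrS; apply: (le_trans (p_add _ _)); lra.
Qed.

Definition d x y := p (y - x).

Lemma d_tri x y z : d x z <= d x y + d y z.
Proof.
rewrite /d; have -> : z - x = (y - x) + (z - y) by rewrite [RHS]addrC addrA subrK.
exact: p_add.
Qed.

Lemma d_sym x y : d x y = d y x.
Proof. by rewrite /d -opprB p_opp. Qed.

Lemma d_eq x y : d x y = 0 <-> x = y.
Proof.
split; first by move=> /p_eq0 /eqP; rewrite subr_eq0 => /eqP ->.
by move=> ->; rewrite /d subrr p_0.
Qed.

Lemma d_ge0 x y : 0 <= d x y.
Proof. exact: p_ge0. Qed.

Lemma d_self x : d x x = 0.
Proof. by apply/d_eq. Qed.

Lemma ball_nbhd x r : 0 < r -> nbhd (mtop d) x (fun y => d x y < r).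
Proof. by move=> r0; apply: nbhd_open; [apply: ball_open; apply: d_tri | rewrite d_self]. Qed.

Lemma tt_Q U : nbhd (mtop d) 0 U -> exists V, nbhd (mtop d) 0 V /\ Q V /\ forall z, V z -> U z.
Proof.
move=> [O [oO [O0 OU]]]; have [r [r0 hr]] := oO 0 O0.
have [m hm] := w_small r0.
exists (Us m.+1); split; last split.
- apply: nbhd_mono (ball_nbhd 0 (w_gt0 R m.+1)) _ => z hz.
  by apply: p_Us; move: hz; rewrite /d subr0.
- by case: (Us_spec m).
- move=> z /Us_p hz; apply: OU; apply: hr; rewrite /d subr0.
  have := w_le R (leqnSn m); lra.
Qed.

Lemma tt_linear : linear_topology (mtop d).
Proof.
split.
- exact: mtop_topology.
- move=> x y xy.
  have r0 : 0 < d x y.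
    by rewrite lt_neqAle d_ge0 andbT eq_sym; apply/eqP => /d_eq.
  exists (fun z => d x z < d x y / 2), (fun z => d y z < d x y / 2).
  split; first by apply: ball_nbhd; lra.
  split; first by apply: ball_nbhd; lra.
  move=> z [h1 h2]; have := d_tri x z y; rewrite (d_sym z y); lra.
- move=> x0 y0 U [O [oO [O0 OU]]]; have [r [r0 hr]] := oO _ O0.
  exists (fun x => d x0 x < r / 2), (fun y => d y0 y < r / 2).
  split; first by apply: ball_nbhd; lra.
  split; first by apply: ball_nbhd; lra.
  move=> x y hx hy; apply: OU; apply: hr; rewrite /d.
  have -> : x + y - (x0 + y0) = (x - x0) + (y - y0).
    by rewrite opprD addrACA.
  have := p_add (x - x0) (y - y0); rewrite /d in hx hy; lra.
- move=> a0 x0 U [O [oO [O0 OU]]]; have [r [r0 hr]] := oO _ O0.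
  have [m hm] := w_small (divr_gt0 r0 (ltr0Sn R 2)).
  have hU : nbhd tau (0 *: x0) (Us m) by rewrite scale0r; apply: Us_nbhd.
  have [e' [V' [e0 [hV' hV'']]]] := htauS hU.
  have hx0 := nbhd_pt hV'.
  set N := Num.Def.archi_bound `|a0|.
  have hN : `|a0| < N%:R by apply: archi_boundP.
  have N0 : 0 < (N%:R : R) by apply: le_lt_trans hN.
  have hpa : forall z, p (a0 *: z) <= p z *+ N.
    move=> z; have -> : a0 *: z = ((a0 / N%:R) *: z) *+ N.
      by rewrite scalerMnl -mulr_natr mulfVK // gt_eqF.
    apply: (le_trans (p_muln _ _)); apply: ler_wMn2r.
    apply: p_scale; rewrite normrM normfV normr_nat ler_pdivrMr // mul1r; exact: ltW.
  set del := r / 3%:R / (N%:R + 1).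
  have del0 : 0 < del by rewrite /del !divr_gt0 // ?addr_gt0 //.
  exists (Num.min e' 1), (fun x => d x0 x < del); split; first by rewrite lt_min e0 ltr01.
  split; first exact: ball_nbhd.
  move=> a x; rewrite lt_min => /andP [ha1 ha2] hx.
  apply: OU; apply: hr; rewrite /d.
  have -> : a *: x - a0 *: x0 = (a - a0) *: (x - x0) + (a - a0) *: x0 + a0 *: (x - x0).
    rewrite [(a - a0) *: (x - x0)]scalerBr subrK scalerBr addrA -scalerDl subrK //.
  have h1 : p ((a - a0) *: (x - x0)) <= p (x - x0) by apply: p_scale; apply: ltW.
  have h2 : p ((a - a0) *: x0) <= w R m.
    by apply: Us_p; apply: hV''; rewrite // subr0.
  have h3 := hpa (x - x0); rewrite -mulr_natr in h3.
  have h4 := p_add ((a - a0) *: (x - x0) + (a - a0) *: x0) (a0 *: (x - x0)).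
  have h5 := p_add ((a - a0) *: (x - x0)) ((a - a0) *: x0).
  rewrite /d in hx.
  have h6 : p (x - x0) * (N%:R + 1) < r / 3%:R.
    by rewrite -ltr_pdivlMr ?addr_gt0.
  have h7 : p (x - x0) * N%:R + p (x - x0) = p (x - x0) * (N%:R + 1).
    by rewrite mulrDr mulr1.
  lra.
Qed.

Theorem construct : exists tt : (E -> Prop) -> Prop,
  [/\ locally_solid le sup tt, metrisable tt, coarser tt tau, coarser taus tt
    & forall U, nbhd tt 0 U -> exists V, nbhd tt 0 V /\ Q V /\ forall z, V z -> U z].
Proof.
exists (mtop d); split.
- split; first exact: tt_linear.
  move=> U /tt_Q [V [hV [QV VU]]]; exists V; split => //; split => //.
  exact: hQs.
- exists d; split.
  + exact: d_ge0.
  + exact: d_eq.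
  + exact: d_sym.
  + exact: d_tri.
  + by move=> O.
- move=> O oO; apply: open_of_nbhd => // x Ox.
  have [r [r0 hr]] := oO x Ox; have [m hm] := w_small r0.
  apply: nbhd_mono (transl0 x htauA (Us_nbhd m)) _ => y /Us_p hy.
  apply: hr; rewrite /d; lra.
- move=> O /hsT oO x Ox.
  have [rS [rS0 hrS]] := oO x Ox.
  have hB : nbhd taus x (fun y => dS x y < rS).
    apply: nbhd_open; first by apply/hsT; apply: ball_open.
    by have [_ ->] := dS_eq x x.
  have [O' [oO' [O'0 O'B]]] := transl_back hsA hB.
  have [s [s0 hs]] := (proj1 (hsT O') oO') 0 O'0.
  have [n hn] := w_small s0.
  exists (w R n.+1); split; first exact: w_gt0.
  move=> y /p_Us hy; apply: hrS.
  have : O' (y - x).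
    apply: hs; case: (Us_spec n) => _ _ hd _; have := hd _ hy.
    have := w_le R (leqnSn n); lra.
  by move=> /O'B; rewrite addrC subrK.
- exact: tt_Q.
Qed.

End Constr.
Unset Implicit Arguments.
Local Close Scope ring_scope.

Theorem proposition3p4 (R : realType) (E : lmodType R)
  (le : E -> E -> Prop) (sup : E -> E -> E)
  (hVL : is_vector_lattice le sup)
  (tau : (E -> Prop) -> Prop) (htau : locally_solid le sup tau)
  (taus : (E -> Prop) -> Prop) (hlin : linear_topology taus)
  (hmet : metrisable taus) (hcoarse : coarser taus tau) :
  (exists tt : (E -> Prop) -> Prop,
      [/\ locally_solid le sup tt, metrisable tt, coarser tt tau & coarser taus tt])
  /\ (forall tt : (E -> Prop) -> Prop,
        locally_solid le sup tt -> metrisable tt -> coarser tt tau -> coarser taus tt ->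
        (o_lebesgue le sup tau -> o_lebesgue le sup tt) /\
        (uo_lebesgue le sup tau -> uo_lebesgue le sup tt))
  /\ (fatou le sup tau ->
      exists tt : (E -> Prop) -> Prop,
        [/\ locally_solid le sup tt, metrisable tt, coarser tt tau, coarser taus tt
          & fatou le sup tt]).
Proof.
have [[hT _ hA hS] hsol] := htau.
have [_ _ hsA _] := hlin.
have [dS [d0 deq _ dtri hiff]] := hmet.
have hsT : forall O, taus O <-> mtop dS O by [].
split; last split.
- have [tt [h1 h2 h3 h4 _]] := @construct R E le sup hVL tau hT hA hS taus dS d0 deq dtri hsT hsA hcoarse
    (solid le sup) hsol (fun V h => h).
  by exists tt.
- move=> tt hls _ hc _.
  have conv : forall (I : Type) (leI : I -> I -> Prop) (x : I -> E) (x0 : E),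
      tconv tau leI x x0 -> tconv tt leI x x0.
    move=> I leI x x0 h U [O [oO [Ox OU]]]; apply: h.
    by exists O; split; [apply: hc | split].
  split.
  + move=> [_ h]; split => // I leI x x0 hd ho; apply: conv; exact: h.
  + move=> [_ h]; split => // I leI x x0 hd ho; apply: conv; exact: h.
- move=> [_ hf].
  have hQ : forall U, nbhd tau 0 U -> exists V, nbhd tau 0 V /\
      (solid le sup V /\ order_closed le sup V) /\ forall z, V z -> U z.
    by move=> U /hf [V [hV [s1 [s2 s3]]]]; exists V.
  have [tt [h1 h2 h3 h4 h5]] := @construct R E le sup hVL tau hT hA hS taus dS d0 deq dtri hsT hsA hcoarse
    (fun V => solid le sup V /\ order_closed le sup V) hQ (fun V h => proj1 h).
  exists tt; split => //; split => // U /h5 [V [hV [[s1 s2] s3]]].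
  by exists V.
Qed.
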